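(* Let $G\in\mathscr G_d$ and let $\mu$ be a nonzero finite Borel measure on $S^{n-1}$ not concentrated on any closed hemisphere. If $\{K_i\}_{i\in\mathbb N}\subseteq\mathscr K^n_{(o)}$ satisfies $$\sup_{i\in\mathbb N}\int_{S^{n-1}}G(\xi,\rho_{K_i^*}(\xi))\,d\mu(\xi)<+\infty,$$ then there is a finite constant $R$ with $K_i\subseteq RB^n$ for all $i\in\mathbb N$.
   Context: $S^{n-1}$ unit sphere, $B^n$ unit ball of $\mathbb R^n$, $n\ge2$. $\mathscr K^n_{(o)}$: compact convex sets with the origin in their interior; $\rho_K(x)=\max\{t\ge0:tx\in K\}$, $K^*=\{x:x\cdot y\le1\ \forall y\in K\}$. $\mathscr G_d$ is the set of $G:S^{n-1}\times(0,\infty)\to(0,\infty)$ such that $G$ and $G_t=\partial G/\partial t$ are continuous, and for each $u\in S^{n-1}$: $G_t(u,\cdot)<0$ on $(0,\infty)$, $\lim_{t\to0^+}G(u,t)=\infty$, $\lim_{t\to\infty}G(u,t)=0$. $\mu$ is not concentrated on any closed hemisphere if $\int_{S^{n-1}}(u\cdot\xi)_+\,d\mu(\xi)>0$ for all $u\in S^{n-1}$. *)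

(* Defs.v *)
From HB Require Import structures.
From mathcomp Require Import all_boot all_order all_algebra.
From mathcomp Require Import all_classical all_reals all_analysis.
Set Implicit Arguments. Unset Strict Implicit. Unset Printing Implicit Defensive.
Import Order.TTheory GRing.Theory Num.Theory.
Import numFieldNormedType.Exports.
Local Open Scope classical_set_scope.
Local Open Scope ring_scope.

Definition dotv (R : realType) (n : nat) (x y : 'rV[R]_n) : R :=
  \sum_(i < n) x ord0 i * y ord0 i.

Definition enorm (R : realType) (n : nat) (x : 'rV[R]_n) : R :=
  Num.sqrt (dotv x x).

Definition sphere (R : realType) (n : nat) : set 'rV[R]_n :=
  [set x | enorm x = 1].

Definition eball (R : realType) (n : nat) (r : R) : set 'rV[R]_n :=
  [set x | enorm x <= r].

Definition borelRn (R : realType) (n : nat) :=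
  g_sigma_algebraType (@open 'rV[R]_n).

Definition convex_body_o (R : realType) (n : nat) (K : set 'rV[R]_n) : Prop :=
  compact K /\
  (forall x y (t : R), K x -> K y -> 0 <= t -> t <= 1 ->
     K ((1 - t) *: x + t *: y)) /\
  (interior K) 0.

Definition radial (R : realType) (n : nat) (K : set 'rV[R]_n) (x : 'rV[R]_n) : R :=
  sup [set t : R | 0 <= t /\ K (t *: x)].

Definition polar (R : realType) (n : nat) (K : set 'rV[R]_n) : set 'rV[R]_n :=
  [set x | forall y, K y -> dotv x y <= 1].

Definition class_Gd (R : realType) (n : nat) (G : 'rV[R]_n -> R -> R) : Prop :=
  (forall u t, sphere u -> 0 < t -> 0 < G u t) /\
  {within (@sphere R n) `*` `]0, +oo[%classic,
     continuous (fun p : 'rV[R]_n * R => G p.1 p.2)} /\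
  (forall u t, sphere u -> 0 < t -> derivable (G u) t 1) /\
  {within (@sphere R n) `*` `]0, +oo[%classic,
     continuous (fun p : 'rV[R]_n * R => derive1 (G p.1) p.2)} /\
  (forall u t, sphere u -> 0 < t -> derive1 (G u) t < 0) /\
  (forall u, sphere u -> G u t @[t --> 0^'+] --> +oo) /\
  (forall u, sphere u -> G u t @[t --> +oo] --> 0).

Definition pospart (R : realType) (a : R) : R := Num.max a 0.

(* Main.v *)
Require Import Defs.
From HB Require Import structures.
From mathcomp Require Import all_boot all_order all_algebra.
From mathcomp Require Import all_classical all_reals all_analysis.
From mathcomp Require Import ring lra measurable_realfun.
Import Order.TTheory GRing.Theory Num.Theory.
Import numFieldNormedType.Exports.
Local Open Scope classical_set_scope.
Local Open Scope ring_scope.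

Section H.
Variable R : realType.
Variable n : nat.

Lemma dotvZl a (x y : 'rV[R]_n) : dotv (a *: x) y = a * dotv x y.
Proof. rewrite /dotv mulr_sumr; apply: eq_bigr => i _; rewrite mxE mulrA. done. Qed.

Lemma dotvC (x y : 'rV[R]_n) : dotv x y = dotv y x.
Proof. by rewrite /dotv; apply: eq_bigr => i _; rewrite mulrC. Qed.

Lemma dotv_ge0 (x : 'rV[R]_n) : 0 <= dotv x x.
Proof. by apply: sumr_ge0 => i _; rewrite -expr2 sqr_ge0. Qed.

Lemma sphere_dot (x : 'rV[R]_n) : sphere x -> dotv x x = 1.
Proof.
rewrite /sphere /enorm /= => h.
by rewrite -(sqr_sqrtr (dotv_ge0 x)) h expr1n.
Qed.

Lemma sphere_coord (x : 'rV[R]_n) i : sphere x -> `|x ord0 i| <= 1.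
Proof.
move=> /sphere_dot h.
have : x ord0 i * x ord0 i <= 1.
  rewrite -h /dotv (bigD1 i) //= lerDl.
  by apply: sumr_ge0 => j _; rewrite -expr2 sqr_ge0.
move=> H; rewrite leNgt; apply/negP => H1.
have : 1 < `|x ord0 i| * `|x ord0 i|.
  by rewrite -[1](mulr1 1); apply: ltr_pM.
rewrite -normrM ger0_norm; first lra.
by rewrite -expr2 sqr_ge0.
Qed.

Lemma dotv_bound (x y : 'rV[R]_n) : (forall i, `|x ord0 i| <= 1) ->
  (forall i, `|y ord0 i| <= 1) -> `|dotv x y| <= n%:R.
Proof.
move=> hx hy; rewrite /dotv; apply: le_trans (ler_norm_sum _ _ _) _.
rewrite -[n in n%:R]card_ord -sumr_const.
apply: ler_sum => i _; rewrite normrM -[1](mulr1 1).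
by apply: ler_pM => //.
Qed.

End H.
Section C.
Variable R : realType.
Variable n : nat.







Lemma cont_dotself : continuous (fun x : 'rV[R]_n => dotv x x).
Proof.
rewrite /dotv.
apply: (@continuous_big _ _ +%R 0 xpredT) => [|i _].
  exact: add_continuous.
move=> x; apply: continuousM; exact: coord_continuous.
Qed.

Lemma sphereE : (@sphere R n) = (fun x => dotv x x) @^-1` [set 1].
Proof.
apply/seteqP; split => x /=; first exact: sphere_dot.
by rewrite /sphere /enorm /= => ->; rewrite sqrtr1.
Qed.

Lemma closed_sphere : closed (@sphere R n).
Proof.
rewrite sphereE; apply: preimage_closed.
  by move=> x _; exact: cont_dotself.
exact: closed_eq.
Qed.

Lemma compact_sphere : compact (@sphere R n).
Proof.
apply: bounded_closed_compact; last exact: closed_sphere.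
exists 1; split; first exact: num_real.
move=> M M1 x /= sx.
rewrite /Num.norm /= mx_normrE; apply: bigmax_le => [|ij _]; first lra.
case: ij => [i j] /=; rewrite (ord1 i).
have := @sphere_coord R n x j sx; lra.
Qed.

End C.

Section I.
Context d (T : measurableType d) (R : realType).
Variable mu : {measure set T -> \bar R}.

Lemma ge0_le_integral_nm (D : set T) (f1 f2 : T -> \bar R) :
  (forall x, D x -> (0 <= f1 x)%E) -> (forall x, D x -> (f1 x <= f2 x)%E) ->
  (\int[mu]_(x in D) f1 x <= \int[mu]_(x in D) f2 x)%E.
Proof.
move=> f10 f12.
rewrite !ge0_integralE //; last by move=> x Dx; apply: le_trans (f12 x Dx); exact: f10.
apply: le_ereal_sup => _ [h hf <-]; exists h => // x.
apply: le_trans (hf x) _; rewrite /patch; case: ifP => // /[!inE] Dx.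
exact: f12.
Qed.

Lemma int_shift (D : set T) (mD : measurable D) (p q : T -> R) (k : R) :
  measurable_fun D p -> measurable_fun D q ->
  (forall x, D x -> 0 <= p x) -> (forall x, D x -> 0 <= q x) -> 0 <= k ->
  (forall x, D x -> p x <= q x + k) ->
  (\int[mu]_(x in D) (p x)%:E <= \int[mu]_(x in D) (q x)%:E + k%:E * mu D)%E.
Proof.
move=> mp mq p0 q0 k0 pq.
rewrite -integral_cst //.
rewrite -ge0_integralD //; try (by move=> x Dx; rewrite lee_fin ?q0);
  try (by apply/measurable_EFinP).
apply: ge0_le_integral => //.
- by apply/measurable_EFinP.
- by apply: emeasurable_funD; [apply/measurable_EFinP| exact: measurable_cst].
Qed.

End I.
Section M.
Variable R : realType.
Variable n : nat.

Lemma mcoord (i : 'I_n) : measurable_fun setT (fun x : borelRn R n => (x : 'rV[R]_n) ord0 i).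
Proof.
apply: measurability; first exact: RGenOInfty.measurableE.
move=> _ [_ [a ->] <-].
apply: sub_sigma_algebra. rewrite /= setTI.
move: (@coord_continuous R 1 n ord0 i) => /continuousP; apply.
exact: interval_open.
Qed.

Lemma mdot (u : 'rV[R]_n) : measurable_fun setT (fun x : borelRn R n => dotv u x).
Proof.
rewrite /dotv; apply: measurable_sum => i.
apply: measurable_funM; first exact: measurable_cst.
exact: mcoord.
Qed.

Lemma mpos (u : 'rV[R]_n) D : measurable_fun D (fun x : borelRn R n => pospart (dotv u x)).
Proof.
apply: (measurable_funS measurableT) => //.
rewrite /pospart.
by apply: measurable_maxr; [exact: mdot | exact: measurable_cst].
Qed.

End M.
Lemma bigmin_le_mem (R : realType) (T : eqType) (s : seq T) (F : T -> R) u :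
  u \in s -> \big[Num.min/1]_(v <- s) F v <= F u.
Proof.
elim: s => // a s IH; rewrite inE big_cons => /orP [/eqP -> | us].
  by rewrite ge_min lexx.
by rewrite ge_min (IH us) orbT.
Qed.

Lemma compact_unif (R : realType) (T : ptopologicalType) (A : set T) (P : R -> T -> Prop) :
  compact A ->
  (forall e e' v, 0 < e' -> e' <= e -> P e v -> P e' v) ->
  (forall u, A u -> exists e, 0 < e /\ exists O, nbhs u O /\ forall v, A v -> O v -> P e v) ->
  exists e, 0 < e /\ forall v, A v -> P e v.
Proof.
move=> cA Pmono H.
have Hx : forall u, exists p : R * set T, (A u -> 0 < p.1 /\ nbhs u p.2 /\
     forall v, A v -> p.2 v -> P p.1 v).
  move=> u.
  have [Au|nAu] := pselect (A u); last by exists (0, setT).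
  have [e [e0 [W [uW HW]]]] := H u Au.
  by exists (e, W).
have [f Hf] := boolp.choice Hx.
move: cA; rewrite compact_cover => /(_ T A (fun u => interior (f u).2)).
case.
- by move=> u _; exact: open_interior.
- by move=> u Au; exists u => //; have [_ [] ] := Hf u Au.
move=> D' sD cov.
exists (\big[Order.min/1]_(u <- finmap.enum_fset D') (f u).1); split.
  rewrite big_seq; apply: (big_ind (fun x : R => 0 < x)) => //.
    by move=> a b ha hb; rewrite lt_min ha hb.
  by move=> u uD; have [] := Hf u (set_mem (sD u uD)).
move=> v Av; have [u uD iv] := cov v Av.
have [h1 [h2 h3]] := Hf u (set_mem (sD u uD)).
apply: (Pmono (f u).1); last exact: (h3 v Av (nbhs_singleton iv)).
  rewrite big_seq; apply: (big_ind (fun x : R => 0 < x)) => //.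
    by move=> a b ha hb; rewrite lt_min ha hb.
  by move=> w wD; have [] := Hf w (set_mem (sD w wD)).
exact: bigmin_le_mem.
Qed.

Section D.
Variable R : realType.
Variable n : nat.
Variable G : 'rV[R]_n -> R -> R.
Hypothesis hG : class_Gd G.

Lemma G_mono u : sphere u -> forall t1 t2, 0 < t1 -> t1 <= t2 -> G u t2 <= G u t1.
Proof.
move=> su t1 t2 t10 t12.
have [_ [_ [hd [_ [hneg _]]]]] := hG.
have hd' : forall x, x \in `]0, t2 + 1[ -> derivable (G u) x 1.
  by move=> x; rewrite in_itv /= => /andP[x0 _]; exact: hd.
apply: (@ler0_derive1_le_oo _ (G u) 0 (t2 + 1)) => //.

- move=> x; rewrite in_itv /=.
  by move=> /andP[x0 _]; apply: ltW; exact: hneg.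
- move=> y yi; apply/differentiable_continuous; rewrite -derivable1_diffP.
  by apply: hd'; move: yi; rewrite inE.
- by rewrite in_itv /=; apply/andP; split; lra.
- by rewrite in_itv /=; apply/andP; split; lra.
Qed.

Lemma G_pt u (c : R) : sphere u -> exists t1, 0 < t1 /\ c < G u t1.
Proof.
move=> su.
have [_ [_ [_ [_ [_ [hlim _]]]]]] := hG.
have : \forall t \near (0:R)^'+, 0 < t /\ c < G u t.
  near=> t; split; first by near: t; exact: nbhs_right_gt.
  near: t; move: (hlim u su) => /cvgryPgt; exact.
by case/filter_ex => t1 [? ?]; exists t1.
Unshelve. all: by end_near. Qed.

Lemma G_cont_near u t1 (c : R) : sphere u -> 0 < t1 -> c < G u t1 ->
  \forall v \near u, sphere v -> c < G v t1.
Proof.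
move=> su t10 cG.
have [_ [hc _]] := hG.
move/subspace_continuousP : hc => /(_ (u, t1)).
have Au : ((@sphere R n) `*` `]0, +oo[%classic) (u, t1).
  by split => //=; rewrite in_itv /= andbT.
move=> /(_ Au) hcv.
have := hcv [set r | c < r] (lt_nbhsr cG).
rewrite /from_subspace /= => h.
case: h => [[P Q]] /= [Pu Qt] PQ.
apply: filterS Pu => v Pv sv.
have := PQ (v, t1); rewrite /from_subspace /=; apply.
  by split => //; exact: nbhs_singleton.
by split => //=; rewrite in_itv /= andbT.
Qed.

End D.
Section Dini.
Variable R : realType.
Variable n : nat.
Variable G : 'rV[R]_n -> R -> R.
Hypothesis hG : class_Gd G.

Lemma dini (c : R) : exists t0, 0 < t0 /\
  forall xi, sphere xi -> forall t, 0 < t -> t <= t0 -> c < G xi t.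
Proof.
have hm : forall e e' v, 0 < e' -> e' <= e ->
    (forall t, 0 < t -> t <= e -> c < G v t) ->
    (forall t, 0 < t -> t <= e' -> c < G v t).
  move=> e e' v e'0 e'e H t t0 te'; apply: H => //; exact: le_trans te' e'e.
have hl : forall u, sphere u -> exists e, 0 < e /\ exists W, nbhs u W /\
    forall v, sphere v -> W v -> (forall t, 0 < t -> t <= e -> c < G v t).
  move=> u su; have [t1 [t10 ct1]] := @G_pt R n G hG u (c) su.
  exists t1; split => //; exists [set v | sphere v -> c < G v t1]; split.
    exact: G_cont_near.
  move=> v sv hv t t0 tt1; apply: lt_le_trans (hv sv) _.
  exact: (@G_mono R n G hG v sv).
have [e [e0 He]] := @compact_unif R _ (@sphere R n)
  (fun e v => forall t, 0 < t -> t <= e -> c < G v t) (@compact_sphere R n) hm hl.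
by exists e.
Qed.

End Dini.

Lemma pospart_le (R : realType) (a b k : R) : 0 <= k -> a <= b + k ->
  pospart a <= pospart b + k.
Proof.
rewrite /pospart => k0 h; rewrite ge_max; apply/andP; split.
  by apply: (le_trans h); rewrite lerD2r le_max lexx.
by apply: addr_ge0 => //; rewrite le_max lexx orbT.
Qed.

Lemma pospart_ge0 (R : realType) (a : R) : 0 <= pospart a.
Proof. by rewrite /pospart le_max lexx orbT. Qed.

Section Eta.
Variable R : realType.
Variable n : nat.
Variable mu : {measure set (borelRn R n) -> \bar R}.
Hypothesis mu_fin : (mu setT < +oo)%E.

Lemma msphere : measurable (@sphere R n : set (borelRn R n)).
Proof.
rewrite -[X in measurable X]setCK; apply: measurableC.
apply: sub_sigma_algebra; exact: closed_openC (@closed_sphere R n).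
Qed.

Definition mS := fine (mu (@sphere R n)).

Lemma mS_E : mu (@sphere R n) = (mS)%:E.
Proof.
rewrite /mS fineK // ge0_fin_numE //.
apply: le_lt_trans mu_fin; apply: le_measure => //; rewrite inE //.
exact: msphere.
Qed.

Lemma mS_ge0 : 0 <= mS.
Proof. by rewrite /mS fine_ge0. Qed.

Definition phi (u : 'rV[R]_n) :=
  (\int[mu]_(xi in (@sphere R n)) (pospart (dotv u xi))%:E)%E.

Lemma dot_diff (u v xi : 'rV[R]_n) (d : R) :
  (forall i, `|u ord0 i - v ord0 i| <= d) -> (forall i, `|xi ord0 i| <= 1) ->
  dotv u xi <= dotv v xi + n%:R * d.
Proof.
move=> hd hx.
have e : dotv u xi - dotv v xi = \sum_(i < n) (u ord0 i - v ord0 i) * xi ord0 i.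
  by rewrite /dotv -sumrB; apply: eq_bigr => i _; rewrite mulrBl.
suff : dotv u xi - dotv v xi <= n%:R * d by lra.
rewrite e; apply: le_trans (ler_norm _) _.
apply: le_trans (ler_norm_sum _ _ _) _.
rewrite mulr_natl -[n in _ *+ n]card_ord -sumr_const.
apply: ler_sum => i _; rewrite normrM -[d]mulr1.
by apply: ler_pM => //.
Qed.

Lemma phi_le (u v : 'rV[R]_n) (d : R) : 0 <= d ->
  (forall i, `|u ord0 i - v ord0 i| <= d) ->
  (phi u <= phi v + (n%:R * d * mS)%:E)%E.
Proof.
move=> d0 hd; rewrite EFinM -mS_E /phi.
apply: int_shift.
- exact: msphere.
- exact: mpos.
- exact: mpos.
- by move=> *; exact: pospart_ge0.
- by move=> *; exact: pospart_ge0.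
- by apply: mulr_ge0.
- move=> xi sxi; apply: pospart_le; first by apply: mulr_ge0.
  apply: dot_diff => // i; exact: sphere_coord.
Qed.

Lemma phi_fin (u : 'rV[R]_n) : sphere u -> 
  0 <= fine (phi u) /\ phi u = (fine (phi u))%:E.
Proof.
move=> su.
have h0 : (0 <= phi u)%E.
  by apply: integral_ge0 => xi _; rewrite lee_fin pospart_ge0.
have h1 : (phi u <= (n%:R * mS)%:E)%E.
  rewrite EFinM -mS_E /phi.
  have := @int_shift _ _ R mu _ (msphere) (fun xi => pospart (dotv u xi)) (fun _ => 0) n%:R.
  rewrite integral0 add0e; apply.
  - exact: mpos.
  - exact: measurable_cst.
  - by move=> *; exact: pospart_ge0.
  - by [].
  - by [].
  - move=> xi sxi; rewrite add0r /pospart ge_max ler0n andbT.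
    apply: le_trans (ler_norm _) _; apply: dotv_bound => i; exact: sphere_coord.
have hf : phi u \is a fin_num by rewrite ge0_fin_numE // (le_lt_trans h1) // ltry.
by split; [exact: fine_ge0 | rewrite fineK].
Qed.

Lemma eta_pos : (forall u, sphere u -> (0 < phi u)%E) ->
  exists eta, 0 < eta /\ forall u, sphere u -> (eta%:E <= phi u)%E.
Proof.
move=> mu_nc.
have hm : forall e e' v, 0 < e' -> e' <= e -> (e%:E <= phi v)%E ->
    (e'%:E <= phi v)%E.
  by move=> e e' v _ ee' h; apply: le_trans h; rewrite lee_fin.
have hl : forall u, sphere u -> exists e, 0 < e /\ exists W, nbhs u W /\
    forall v, sphere v -> W v -> (e%:E <= phi v)%E.
  move=> u su; have [a0 ae] := phi_fin u su.
  set a := fine (phi u) in a0 ae *.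
  have apos : 0 < a by rewrite -lte_fin -ae; exact: mu_nc.
  have m0 := mS_ge0.
  pose d := a / (2 * (n%:R * mS + 1)).
  have nm0 : 0 < n%:R * mS + 1 by apply: ltr_wpDl => //; apply: mulr_ge0.
  have dpos : 0 < d by apply: divr_gt0 => //; apply: mulr_gt0.
  have dE : d * (n%:R * mS + 1) = a / 2.
    by rewrite /d; field; rewrite gt_eqF.
  exists (a / 2); split; first by apply: divr_gt0.
  exists (ball u d); split; first exact: nbhsx_ballx.
  move=> v sv buv.
  have hi : forall i, `|u ord0 i - v ord0 i| <= d.
    move=> i; case: buv => _ /(_ ord0 i); rewrite /ball /= => h; exact: ltW.
  have := phi_le u v d (ltW dpos) hi.
  rewrite ae (proj2 (phi_fin v sv)) -EFinD !lee_fin => h.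
  have : n%:R * d * mS <= a / 2.
    rewrite -dE; nra.
  lra.
have [e [e0 He]] := @compact_unif R _ (@sphere R n) (fun e v => (e%:E <= phi v)%E)
  (@compact_sphere R n) hm hl.
by exists e.
Qed.

End Eta.
Section Rad.
Variable R : realType.
Variable n : nat.

Lemma dotv_bound2 (x y : 'rV[R]_n) (B : R) : (forall i, `|x ord0 i| <= 1) ->
  (forall i, `|y ord0 i| <= B) -> `|dotv x y| <= n%:R * B.
Proof.
move=> hx hy; rewrite /dotv; apply: le_trans (ler_norm_sum _ _ _) _.
rewrite mulr_natl -[n in _ *+ n]card_ord -sumr_const.
apply: ler_sum => i _; rewrite normrM -[B]mul1r.
by apply: ler_pM => //.
Qed.

Variable K : set 'rV[R]_n.
Hypothesis hK : convex_body_o K.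

Lemma K_bounded : exists B, 0 <= B /\ forall y, K y -> forall i, `|y ord0 i| <= B.
Proof.
have [cK _] := hK.
have := compact_bounded cK; rewrite /bounded_near => hb.
have [B [hB1 hB2]] : exists B : R, 0 <= B /\ K `<=` [set y | `|y| <= B].
  have : \forall M \near +oo, 0 <= M /\ (globally K) [set y | `|y| <= M].
    near=> M; split; last by near: M.
    by near: M; apply: nbhs_pinfty_ge; exact: num_real.
  by case/filter_ex => M [? ?]; exists M.
exists B; split => // y Ky i.
apply: le_trans (hB2 y Ky).
rewrite /Num.norm /= mx_normrE.
by apply/bigmax_geP; right; exists (ord0, i).
Unshelve. all: by end_near. Qed.

Lemma K_ball : exists e : R, 0 < e /\ forall y : 'rV[R]_n, (forall i, `|y ord0 i| < e) -> K y.
Proof.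
have [_ [_ hi]] := hK.
move: hi; rewrite /interior => /nbhs_ballP [e e0 he].
exists e; split => // y hy; apply: he; split => // i j.
rewrite (ord1 i) /ball /= !mxE sub0r normrN; exact: hy.
Qed.

Let E xi := [set t : R | 0 <= t /\ polar K (t *: xi)].

Lemma E0 xi : E xi 0.
Proof.
split => // y Ky; rewrite dotvZl mul0r; lra.
Qed.

Lemma E_ub xi x : K x -> 0 < dotv xi x -> ubound (E xi) (dotv xi x)^-1.
Proof.
move=> Kx hx t [t0 ht]; have := ht x Kx; rewrite dotvZl => h.
by rewrite -[X in _ <= X]mul1r ler_pdivlMr //.
Qed.

Lemma rad_le xi x : K x -> 0 < dotv xi x -> radial (polar K) xi <= (dotv xi x)^-1.
Proof.
move=> Kx hx; apply: ge_sup; first by exists 0; exact: E0.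
exact: E_ub.
Qed.

Lemma rad_pos xi : sphere xi -> 0 < radial (polar K) xi.
Proof.
move=> sxi.
have [e [e0 he]] := K_ball.
have Ky : K ((e / 2) *: xi).
  apply: he => i; rewrite mxE normrM (gtr0_norm (divr_gt0 e0 _)) //.
  have := @sphere_coord R n xi i sxi; nra.
have hy : 0 < dotv xi ((e / 2) *: xi).
  by rewrite dotvC dotvZl sphere_dot // mulr1 divr_gt0.
have hub : has_ubound (E xi) by exists (dotv xi ((e / 2) *: xi))^-1; exact: E_ub.
have [B [B0 hB]] := K_bounded.
have tpos : 0 < (n%:R * B + 1)^-1 by rewrite invr_gt0; apply: ltr_wpDl => //; apply: mulr_ge0.
have tpos2 := tpos.
apply: lt_le_trans tpos _; apply: ub_le_sup => //; hnf; split; first exact: (ltW tpos2).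
move=> y Ky'; rewrite dotvZl.
have := @dotv_bound2 xi y B (fun i => @sphere_coord R n xi i sxi) (hB y Ky').
move=> hd; have hd' : dotv xi y <= n%:R * B by apply: le_trans (ler_norm _) hd.
rewrite ler_pdivrMl; last by apply: ltr_wpDl => //; apply: mulr_ge0.
lra.
Qed.

End Rad.
Theorem lemma5p2 (R : realType) (n : nat) (hn : (2 <= n)%N)
  (G : 'rV[R]_n -> R -> R) (hG : class_Gd G)
  (mu : {measure set (borelRn R n) -> \bar R})
  (mu_supp : mu (~` (@sphere R n)) = 0%E)
  (mu_fin : (mu setT < +oo)%E)
  (mu_nz : mu setT <> 0%E)
  (mu_nc : forall u : 'rV[R]_n, sphere u ->
     (0 < \int[mu]_(xi in (@sphere R n)) (pospart (dotv u xi))%:E)%E)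
  (K : nat -> set 'rV[R]_n) (hK : forall i, convex_body_o (K i))
  (hbd : exists M : R, forall i,
     (\int[mu]_(xi in (@sphere R n)) (G xi (radial (polar (K i)) xi))%:E
        <= M%:E)%E) :
  exists r : R, forall i, K i `<=` eball r.
Proof.
have [M hM] := hbd.
have [eta [eta0 heta]] := @eta_pos R n mu mu_fin mu_nc.
pose m := mS R n mu.
have m0 : 0 <= m := mS_ge0 R n mu.
have npos : 0 < n%:R :> R by rewrite ltr0n (leq_trans _ hn).
pose c := 2 * n%:R * (`|M| + 1) / eta.
have c0 : 0 < c.
  by apply: divr_gt0 => //; apply: mulr_gt0; [apply: mulr_gt0 | apply: ltr_wpDl].
have cn0 : 0 < c / n%:R by apply: divr_gt0.
have [t0 [t00 ht0]] := @dini R n G hG c.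
pose r := 2 * m / (eta * t0) + 1.
have r1 : 1 <= r.
  rewrite /r lerDr; apply: divr_ge0; [apply: mulr_ge0 => // | apply: ltW; apply: mulr_gt0] => //.
exists r => i x Kx; rewrite /eball /=.
rewrite leNgt; apply/negP => hr.
set rho := enorm x in hr.
have rho0 : 0 < rho by lra.
have xx : dotv x x = rho ^+ 2 by rewrite /rho /enorm sqr_sqrtr // dotv_ge0.
pose u := rho^-1 *: x.
have su : sphere u.
  rewrite /sphere /enorm /= /u dotvZl dotvC dotvZl xx.
  by rewrite mulrA -expr2 -exprMn mulVf ?gt_eqF // expr1n sqrtr1.
pose s := (rho * t0)^-1.
have s0 : 0 < s by rewrite invr_gt0 mulr_gt0.
have hsm : s * m <= eta / 2.
  have et : 0 < eta * t0 by apply: mulr_gt0.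
  pose w := 2 * m / (eta * t0).
  have h1 : w * (eta * t0) = 2 * m by rewrite /w; field; rewrite ?gt_eqF.
  have h2 : 0 <= (rho - w) * (eta * t0).
    by apply: mulr_ge0; [rewrite subr_ge0; rewrite /r -/w in hr; lra | exact: ltW].
  have h3 : s * (rho * t0) = 1 by rewrite /s mulVf // gt_eqF // mulr_gt0.
  have h4 : 0 <= s * (rho * eta * t0 - 2 * m) by apply: mulr_ge0; [exact: ltW| nra].
  nra.
pose q xi := Num.max (pospart (dotv u xi) - s) 0.
have q0 : forall xi, 0 <= q xi by move=> xi; rewrite /q le_max lexx orbT.
have hpt : forall xi, sphere xi ->
    (((c / n%:R) * q xi)%:E <= (G xi (radial (polar (K i)) xi))%:E)%E.
  move=> xi sxi; rewrite lee_fin.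
  have rp := @rad_pos R n (K i) (hK i) xi sxi.
  have Gp : 0 < G xi (radial (polar (K i)) xi) by have [h _] := hG; exact: h.
  rewrite /q; case: (lerP (pospart (dotv u xi) - s) 0) => h.
    by rewrite mulr0; exact: ltW.

  have pu : s < dotv u xi.
    move: h; rewrite /pospart; case: (lerP (dotv u xi) 0) => hd.
      lra.
    lra.
  have dx : dotv xi x = rho * dotv u xi.
    by rewrite dotvC /u dotvZl mulrA mulfV ?gt_eqF // mul1r.
  have dxpos : 0 < dotv xi x by rewrite dx; apply: mulr_gt0 => //; lra.
  have rle := @rad_le R n (K i) xi x Kx dxpos.
  have rlt : radial (polar (K i)) xi <= t0.
    apply: (le_trans rle); rewrite -[X in X <= _]mul1r ler_pdivrMr // dx.
    have : 1 < rho * dotv u xi * t0.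
      have h3 : s * (rho * t0) = 1 by rewrite /s mulVf // gt_eqF // mulr_gt0.
      have h5 : 0 < (dotv u xi - s) * (rho * t0).
        by apply: mulr_gt0; [lra | apply: mulr_gt0].
      nra.
    lra.
  have Gc := ht0 xi sxi _ rp rlt.
  have pb : pospart (dotv u xi) <= n%:R.
    rewrite /pospart ge_max ler0n andbT.
    apply: le_trans (ler_norm _) _; apply: dotv_bound => j.
      exact: sphere_coord.
    exact: sphere_coord.
  have : c / n%:R * (pospart (dotv u xi) - s) <= c / n%:R * n%:R.
    have hsm2 : s * mS R n mu <= eta / 2 := hsm.
    by apply: ler_wpM2l; [exact: ltW | lra].
  rewrite divfK ?gt_eqF //; lra.
have int1 : (\int[mu]_(xi in (@sphere R n)) ((c / n%:R) * q xi)%:E <= M%:E)%E.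
  apply: le_trans (hM i); apply: ge0_le_integral_nm => xi sxi.
    by rewrite lee_fin mulr_ge0 // ltW.
  exact: hpt.
have mq : measurable_fun (@sphere R n : set (borelRn R n)) q.
  apply: measurable_maxr; last exact: measurable_cst.
  apply: measurable_funB; [exact: mpos | exact: measurable_cst].
have eqi : (\int[mu]_(xi in (@sphere R n)) ((c / n%:R) * q xi)%:E =
    (c / n%:R)%:E * \int[mu]_(xi in (@sphere R n)) (q xi)%:E)%E.
  under eq_integral do rewrite EFinM.
  rewrite ge0_integralZl_EFin //; first exact: msphere.
  - by move=> xi _; rewrite lee_fin q0.
  - by apply/measurable_EFinP.
  - exact: ltW.
have int2 : (phi R n mu u <= \int[mu]_(xi in (@sphere R n)) (q xi)%:E
    + s%:E * mu (@sphere R n))%E.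
  apply: int_shift.
  - exact: msphere.
  - exact: mpos.
  - exact: mq.
  - by move=> *; exact: pospart_ge0.
  - by move=> *; exact: q0.
  - exact: ltW.
  - by move=> xi _; rewrite /q -lerBlDr le_max lexx.
have he := heta u su.
rewrite (@mS_E R n mu mu_fin) in int2.
move: int1; rewrite eqi.
have J0 : (0 <= \int[mu]_(xi in (@sphere R n)) (q xi)%:E)%E.
  by apply: integral_ge0 => xi _; rewrite lee_fin q0.
move: J0 int2.
case: (\int[mu]_(xi in (@sphere R n)) (q xi)%:E)%E => [j| |] //.
- move=> j0 int2 int1.
  rewrite -EFinM lee_fin in int1.
  have := le_trans he int2; rewrite -EFinM -EFinD lee_fin => h.
  have kE : c / n%:R * (eta / 2) = `|M| + 1.
    by rewrite /c; field; rewrite !gt_eqF.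
  have : c / n%:R * (eta / 2) <= c / n%:R * j.
    have hsm2 : s * mS R n mu <= eta / 2 := hsm.
    by apply: ler_wpM2l; [exact: ltW | lra].
  have := ler_norm M.
  lra.
- move=> _ _; rewrite muleC gt0_mulye //; rewrite lte_fin.
Qed.
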